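(* Let $V$ be a finite set of variables and let $(\mathit{base}_0, \mathit{stay}_0, \mathit{step}_0, \mathit{conc}_0)$ and $(\mathit{base}_1, \mathit{stay}_1, \mathit{step}_1, \mathit{conc}_1)$ be generalized acceleration lemmas (GALs) over $V$. Define $\mathit{step} := \mathit{step}_0 \lor (\mathit{conc}_1 \land \lnot \mathit{base}_1 \land \mathit{step}_1 \land \mathit{stay}_0)$ and $\mathit{stay} := \mathit{stay}_0 \land \mathit{stay}_1 \land (\mathit{base}_1 \to \mathit{base}_1[V \mapsto V'])$. Then the tuple $(\mathit{base}_0, \mathit{stay}, \mathit{step}, \mathit{conc}_0)$ is also a GAL over $V$.
   Context: Fix a first-order theory $T$. For a set of variables $X$, $\mathcal{A}(X)$ denotes the set of assignments $\nu: X \to \mathcal{V}$ (values). $X' = \{x' \mid x \in X\}$ is a disjoint primed copy of $X$; for $\nu \in \mathcal{A}(X)$, $\nu' \in \mathcal{A}(X')$ is given by $\nu'(x') = \nu(x)$; for $\nu_1,\nu_2 \in \mathcal{A}(X)$, $\langle \nu_1,\nu_2\rangle := \nu_1 \uplus \nu_2'$. $\nu \models_T \alpha$ denotes entailment in $T$. For a formula $\alpha$, $\alpha[V\mapsto V']$ is the result of replacing each $v\in V$ simultaneously by $v'$. A generalized acceleration lemma (GAL) over $V$ is a tuple $(\mathit{base}, \mathit{stay}, \mathit{step}, \mathit{conc})$ of first-order formulas with $\mathit{base}, \mathit{conc}$ having free variables in $V$ and $\mathit{stay}, \mathit{step}$ having free variables in $V \cup V'$, such that: (I) for every sequence $\alpha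 \in \mathcal{A}(V)^\omega$ with $\alpha[0] \models_T \mathit{conc}$, if (a) for all $i$, $\langle\alpha[i],\alpha[i+1]\rangle \models_T \mathit{step} \lor \mathit{stay}$, and (b) for all $i$ there is $j \ge i$ with $\langle\alpha[j],\alpha[j+1]\rangle \models_T \mathit{step}$, then there is $k$ with $\alpha[k] \models_T \mathit{base}$; and (II) for all $\nu,\nu' \in \mathcal{A}(V)$ with $\nu \models_T \mathit{conc}$ and $\langle \nu,\nu'\rangle \models_T \mathit{step}\lor\mathit{stay}$, we have $\nu' \models_T \mathit{conc}$. *)

(* Defs.v *)
(* Formulas are represented semantically: a formula with free
   variables in V is the predicate "nu |=_T alpha" on assignments nu : V -> Val;
   a formula with free variables in V u V' is a predicate on pairs <nu1,nu2>
   (nu1 gives the unprimed, nu2 the primed variables). *)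
From Stdlib Require Import Arith FinFun.

Definition assignment (V Val : Type) : Type := V -> Val.

Definition sformula (V Val : Type) : Type := assignment V Val -> Prop.
Definition tformula (V Val : Type) : Type := assignment V Val -> assignment V Val -> Prop.

(* alpha[V |-> V'] for a state formula alpha: evaluated at <nu1,nu2> it is alpha at nu2. *)
Definition prime_sf {V Val : Type} (a : sformula V Val) : tformula V Val :=
  fun _ nu2 => a nu2.

Definition is_GAL {V Val : Type}
  (base : sformula V Val) (stay step : tformula V Val) (conc : sformula V Val) : Prop :=
  (forall alpha : nat -> assignment V Val,
      conc (alpha 0) ->
      (forall i, step (alpha i) (alpha (S i)) \/ stay (alpha i) (alpha (S i))) ->
      (forall i, exists j, i <= j /\ step (alpha j) (alpha (S j))) ->
      exists k, base (alpha k))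
  /\
  (forall nu nu' : assignment V Val,
      conc nu -> (step nu nu' \/ stay nu nu') -> conc nu').

(* Main.v *)
Require Import Defs.
From Stdlib Require Import Arith FinFun Lia Classical.

Theorem lemma3 (V Val : Type) (HV : Finite V)
  (base0 conc0 base1 conc1 : sformula V Val)
  (stay0 step0 stay1 step1 : tformula V Val) :
  is_GAL base0 stay0 step0 conc0 ->
  is_GAL base1 stay1 step1 conc1 ->
  let step : tformula V Val := fun nu nu' =>
    step0 nu nu' \/ (conc1 nu /\ ~ base1 nu /\ step1 nu nu' /\ stay0 nu nu') in
  let stay : tformula V Val := fun nu nu' =>
    stay0 nu nu' /\ stay1 nu nu' /\ (base1 nu -> prime_sf base1 nu nu') in
  is_GAL base0 stay step conc0.
Proof.
  intros [G0a G0b] [G1a G1b] step stay.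
  unfold step, stay, prime_sf in *.
  split.
  - intros alpha H0 Htr Hinf.
    destruct (classic (forall i, exists j, i <= j /\ step0 (alpha j) (alpha (S j)))) as [Hs|Hs].
    + apply G0a; auto.
      intro i; destruct (Htr i) as [[?|(?&?&?&?)]|(?&?&?)]; auto.
    + apply not_all_ex_not in Hs. destruct Hs as [N HN].
      assert (HNo : forall j, N <= j -> ~ step0 (alpha j) (alpha (S j))).
      { intros j Hj Hj'. apply HN. exists j; auto. }
      exfalso.
      destruct (Hinf N) as [M [HM HstM]].
      destruct HstM as [Hc|(Hc1&Hnb&_&_)]; [exact (HNo M HM Hc)|].
      destruct (G1a (fun i => alpha (M + i))) as [K HK].
      * rewrite Nat.add_0_r; exact Hc1.
      * intro i. cbv beta. rewrite Nat.add_succ_r.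
        destruct (Htr (M + i)) as [[Hc|(?&?&?&?)]|(?&?&?)].
        -- exfalso; apply (HNo (M+i)); [lia|exact Hc].
        -- left; auto.
        -- right; auto.
      * intro i. cbv beta. destruct (Hinf (M + i)) as [j [Hj Hsj]].
        exists (j - M). split; [lia|].
        replace (M + (j - M)) with j by lia.
        replace (M + S (j - M)) with (S j) by lia.
        destruct Hsj as [Hc|(?&?&?&?)].
        -- exfalso; apply (HNo j); [lia|exact Hc].
        -- auto.
      * assert (Hall : forall d, base1 (alpha (M + K + d))).
        { induction d.
          - rewrite Nat.add_0_r; exact HK.
          - rewrite Nat.add_succ_r.
            destruct (Htr (M + K + d)) as [[Hc|(?&Hnb'&?&?)]|(?&?&Hb)].
            + exfalso; apply (HNo (M+K+d)); [lia|exact Hc].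
            + contradiction.
            + auto. }
        destruct (Hinf (M + K)) as [j [Hj Hsj]].
        destruct Hsj as [Hc|(?&Hnb'&?&?)].
        -- apply (HNo j); [lia|exact Hc].
        -- apply Hnb'. replace j with (M + K + (j - (M + K))) by lia. apply Hall.
  - intros nu nu' Hc [[Hs|(?&?&?&?)]|(?&?&?)]; eapply G0b; eauto.
Qed.
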